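(* Let $X$ be an ultrahomogeneous chain. Then, as compactifications of $X$: (1) $\beta_pX=m(X,\tau)$; (2) $\beta_\partial X=m\big((X,\tau_d)\otimes_\ell\{-1,0,1\}\big)$.
   Context: Chain: linearly ordered set; $\mathrm{Aut}(X)$: order-preserving bijections; $X$ ultrahomogeneous: for every $n$ and $x_1<\dots<x_n$, $y_1<\dots<y_n$ there is $g\in\mathrm{Aut}(X)$ with $g(x_k)=y_k$. $\tau$ is the order topology, $\tau_d$ the discrete topology. $\tau_p$ is the topology of pointwise convergence on $\mathrm{Aut}(X)$ w.r.t. $(X,\tau)$, $\tau_\partial$ the permutation topology (identity neighbourhood base: pointwise stabilizers of finite sets). $\beta_pX$ is the maximal equivariant compactification of $(X,\tau)$ for $(\mathrm{Aut}(X),\tau_p)$, i.e. the completion of $X$ with respect to the maximal totally bounded equiuniformity; $\beta_\partial X$ is the maximal equivariant compactification of $(X,\tau_d)$ for $(\mathrm{Aut}(X),\tau_\partial)$. For a linearly ordered space $Y$, $m(Y)$ denotes its smallest linearly ordered compactification, obtained by inserting one point into every gap of $Y$ (including the ends, if $Y$ has no least/greatest element) with the natural order and order topology. $(X,\tau_d)\otimes_\ell\{-1,0,1\}$ is the lexicographically ordered product with its order topology, in which $X$ is identified with the (discrete, dense) subspace $X\times\{0\}$. *)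

(* Defs.v *)
From HB Require Import structures.
From mathcomp Require Import all_boot all_order all_algebra.
From mathcomp Require Import all_classical topology.

Set Implicit Arguments.
Unset Strict Implicit.
Unset Printing Implicit Defensive.

Import Order.TTheory.
Local Open Scope classical_set_scope.
Local Open Scope order_scope.

(* m(Y): the smallest linearly ordered compactification of a chain Y,      *)
(* obtained by inserting one point into every gap of Y (ends included).   *)
(* A gap is a Dedekind cut (A, Y \ A), A a down-set of Y, such that A has  *)
(* no maximum and Y \ A has no minimum; A = set0 (resp. setT) is a gap     *)
(* exactly when Y has no least (resp. greatest) element.                   *)

Section MCompactification.
Context {d : Order.disp_t} (Y : orderType d).

Definition is_gap (A : set Y) : Prop :=
  [/\ (forall x y : Y, y <= x -> A x -> A y),
      (forall x, A x -> exists2 y, A y & x < y) &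
      (forall x, ~ A x -> exists2 y, ~ A y & y < x)].

Definition gap := {A : set Y | is_gap A}.

Inductive mcomp := MPt of Y | MGap of gap.

HB.instance Definition _ := gen_eqMixin mcomp.
HB.instance Definition _ := gen_choiceMixin mcomp.

Definition mcomp_le (u v : mcomp) : bool :=
  match u, v with
  | MPt x, MPt y => x <= y
  | MPt x, MGap B => `[< proj1_sig B x >]
  | MGap A, MPt y => `[< ~ proj1_sig A y >]
  | MGap A, MGap B => `[< proj1_sig A `<=` proj1_sig B >]
  end.

Lemma mcomp_le_refl : reflexive mcomp_le.
Proof. by case=> [x|A] /=; [exact: lexx | apply/asboolP]. Qed.

Lemma mcomp_le_anti : antisymmetric mcomp_le.
Proof.
case=> [x|[A hA]] [y|[B hB]] /=.
- by move=> /le_anti ->.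
- by case/andP=> /asboolP + /asboolP.
- by case/andP=> /asboolP + /asboolP.
- case/andP=> /asboolP AB /asboolP BA; congr MGap.
  apply: eq_sig_hprop => [? ? ?|/=]; first exact: Prop_irrelevance.
  by apply/seteqP; split.
Qed.

Lemma mcomp_le_trans : transitive mcomp_le.
Proof.
case=> [y|[B [dB _ _]]] [x|[A [dA _ _]]] [z|[C [dC _ _]]] /=.
- exact: le_trans.
- by move=> xy /asboolP Cy; apply/asboolP; exact: dC y x xy Cy.
- move=> /asboolP nAy yz; apply/asboolP => Az; apply: nAy.
  exact: dA z y yz Az.
- move=> /asboolP nAy /asboolP Cy; apply/asboolP => a Aa.
  apply: (dC y a) Cy; rewrite leNgt; apply/negP => ya; apply: nAy.
  by apply: dA a y (ltW ya) Aa.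
- move=> /asboolP Bx /asboolP nBz; rewrite leNgt; apply/negP => zx.
  by apply: nBz; apply: dB x z (ltW zx) Bx.
- by move=> /asboolP Bx /asboolP BC; apply/asboolP; exact: BC.
- by move=> /asboolP AB /asboolP nBz; apply/asboolP => Az; apply/nBz/AB.
- by move=> /asboolP AB /asboolP BC; apply/asboolP => a /AB /BC.
Qed.

Fact mcomp_display : Order.disp_t. Proof. exact: Order.Disp tt tt. Qed.

HB.instance Definition _ :=
  Order.Le_isPOrder.Build mcomp_display mcomp
    mcomp_le_refl mcomp_le_anti mcomp_le_trans.

Lemma mcomp_le_total : total (<=%O : rel mcomp).
Proof.
case=> [x|[A hA]] [y|[B hB]]; rewrite /Order.le /= /mcomp_le.
- exact: le_total.
- by apply/orP; case: (pselect (B x)) => h; [left|right]; apply/asboolP.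
- by apply/orP; case: (pselect (A y)) => h; [right|left]; apply/asboolP.
- case: hA hB => dA _ _ [dB _ _]; apply/orP.
  case: (pselect (A `<=` B)) => AB; [by left; apply/asboolP|right].
  apply/asboolP => b Bb.
  have [a Aa nBa] : exists2 a, A a & ~ B a.
    apply: contra_notP AB => /forall2NP nAB c Ac.
    by case: (nAB c) => // /contrapT.
  apply: dA Aa; rewrite leNgt; apply/negP => ba; apply: nBa.
  by apply: dB Bb; exact: ltW.
Qed.

HB.instance Definition _ :=
  Order.POrder_isTotal.Build mcomp_display mcomp mcomp_le_total.

End MCompactification.

Section Chains.
Context {d : Order.disp_t} (X : orderType d).

Definition is_aut (g : X -> X) : Prop := bijective g /\ {homo g : x y / x < y}.

Definition aut := {g : X -> X | is_aut g}.

Definition aut_fun (g : aut) : X -> X := proj1_sig g.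

Definition ultrahomogeneous : Prop :=
  forall s t : seq X, size s = size t -> sorted <%O s -> sorted <%O t ->
    exists g : aut, map (aut_fun g) s = t.

(* the lexicographic product X (x)_l {-1,0,1}; {-1,0,1} is 'I_3 = {0<1<2} *)
Definition lex3 := (X *l 'I_3)%type.

Definition lex3_mid (x : X) : lex3 := (x, Ordinal (isT : 1 < 3)%N).

End Chains.

(* Equivariant compactifications.  A group G acts (via ev) on a space TX;  *)
(* G carries the topology of pointwise convergence w.r.t. the topology of  *)
(* TX, i.e. the initial topology of the evaluations g |-> ev g x.  This   *)
(* gives tau_p for TX = (X, tau) and tau_partial for TX = (X, tau_d).      *)

Section Equivariant.
Context (TX : topologicalType) (G : Type) (ev : G -> TX -> TX).

(* act is an action of the group G = {ev g} (composition, identity) *)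
Definition is_action (K : Type) (act : G -> K -> K) : Prop :=
  (forall g, ev g = id -> forall z, act g z = z) /\
  (forall f g h, ev f = ev g \o ev h -> forall z, act f z = act g (act h z)).

(* joint continuity of act : G x K -> K, where the basic neighbourhoods of
   g in G are {h | forall x in F, ev h x \in U x}, F finite, U x open
   neighbourhoods of ev g x *)
Definition pointwise_jcont (K : topologicalType) (act : G -> K -> K) : Prop :=
  forall (g : G) (k : K) (W : set K), open W -> W (act g k) ->
    exists (F : seq TX) (U : TX -> set TX) (V : set K),
      [/\ (forall x, x \in F -> open (U x) /\ U x (ev g x)),
          open V, V k &
          forall (h : G) (k' : K), (forall x, x \in F -> U x (ev h x)) ->
            V k' -> W (act h k')].

Definition Gspace (K : topologicalType) (act : G -> K -> K) : Prop :=
  is_action act /\ pointwise_jcont act.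

Definition equivariant (K : Type) (act : G -> K -> K) (nu : TX -> K) : Prop :=
  forall g x, nu (ev g x) = act g (nu x).

Definition topological_embedding (S T : topologicalType) (f : S -> T) : Prop :=
  [/\ injective f, continuous f &
      forall U : set S, open U -> exists2 V : set T, open V & f @^-1` V = U].

Definition max_equiv_compactification (L : topologicalType) (iota : TX -> L)
  : Prop :=
  exists actL : G -> L -> L,
    [/\ Gspace actL, compact [set: L] /\ hausdorff_space L,
        topological_embedding iota /\ dense (range iota),
        equivariant actL iota &
        forall (K : topologicalType) (actK : G -> K -> K) (nu : TX -> K),
          compact [set: K] -> hausdorff_space K -> Gspace actK ->
          continuous nu -> equivariant actK nu ->
          exists f : L -> K,
            [/\ continuous f, forall x, f (iota x) = nu x &
                forall g z, f (actL g z) = actK g (f z)]].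

End Equivariant.

(* Main.v *)
Require Import Defs.
From HB Require Import structures.
From mathcomp Require Import all_boot all_order all_algebra.
From mathcomp Require Import all_classical topology.

Module Lemma1p7Helpers.
Set Implicit Arguments.
Unset Strict Implicit.
Unset Printing Implicit Defensive.
Import Order.TTheory.
Local Open Scope classical_set_scope.
Local Open Scope order_scope.


Section Gen.
Context (TX : topologicalType) (G : Type) (ev : G -> TX -> TX)
  (L : topologicalType) (iota : TX -> L).

Definition trf (u : L) : set_system TX :=
  filter_from [set O : set L | open O /\ O u] (fun O => iota @^-1` O).

Hypothesis hdense : dense (range iota).

Lemma trf_filter u : Filter (trf u).
Proof.
apply: filter_from_filter; first by exists setT; split => //; exact: openT.
move=> O1 O2 [o1 u1] [o2 u2]; exists (O1 `&` O2); first by split => //; exact: openI.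
by move=> x [].
Qed.

Lemma trf_proper u : ProperFilter (trf u).
Proof.
apply: filter_from_proper; first exact: trf_filter.
move=> O [oO Ou]; have [|z [Oz [x _ xz]]] := hdense (O:=O) _ oO; first by exists u.
by exists x; rewrite /= xz.
Qed.

Lemma dense_eq (K : topologicalType) (phi psi : L -> K) :
  hausdorff_space K -> continuous phi -> continuous psi ->
  (forall x, phi (iota x) = psi (iota x)) -> phi = psi.
Proof.
move=> hH cphi cpsi e; apply: funext => z; apply: hH => A B hA hB.
have := cphi z A hA; have := cpsi z B hB.
rewrite !nbhsE => -[O2 [oO2 O2z] O2B] [O1 [oO1 O1z] O1A].
have [|w [[O1w O2w] [x _ xw]]] := hdense (O := O1 `&` O2) _ (openI oO1 oO2).
  by exists z.
exists (phi w); split; first by apply: O1A.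
by rewrite -xw e; apply: O2B; rewrite xw.
Qed.

Lemma gen_universal (actL : G -> L -> L)
  (hemb : topological_embedding iota)
  (hcont : forall g, continuous (actL g))
  (heq : equivariant ev actL iota)
  (e : G) (he : ev e = id)
  (hmove : forall u, ~ range iota u -> forall F : seq TX,
     exists O, [/\ open O, O u & forall x x', O (iota x) -> O (iota x') ->
        exists h, (forall y, y \in F -> ev h y = y) /\ ev h x = x'])
  (K : topologicalType) (actK : G -> K -> K) (nu : TX -> K) :
  compact [set: K] -> hausdorff_space K -> Gspace ev actK ->
  continuous nu -> equivariant ev actK nu ->
  exists f : L -> K, [/\ continuous f, forall x, f (iota x) = nu x &
     forall g z, f (actL g z) = actK g (f z)].
Proof.
move=> hK hH [[hid hcomp] hjc] hnu heqnu.
have convpt : forall x0, nu @ trf (iota x0) --> nu x0.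
  move=> x0 W /= Wn; have := hnu x0 W Wn.
  rewrite nbhsE => -[B [oB Bx] BW]; case: hemb => _ _ hop.
  have [V oV VB] := hop B oB.
  exists V; first by split => //; rewrite -VB in Bx.
  by move=> x /= Vx; apply: BW; rewrite -VB.
have conv : forall u : L, exists p : K, nu @ trf u --> p.
  move=> u; case: (pselect (range iota u)) => [[x0 _ <-]|nr].
    by exists (nu x0); exact: convpt.
  have tp := trf_proper u.
  have [p [_ pc]] := hK (nu @ trf u) _ filterT.
  exists p => W /= Wp; move: Wp; rewrite nbhsE => -[W0 [oW0 W0p] W0W].
  have := hjc e p W0 oW0; rewrite (hid e he p) => /(_ W0p).
  move=> [F [U [V [hU oV Vp hfin]]]].
  have [O [oO Ou hO]] := hmove u nr F.
  have [k [[x Ox <-] Vk]] : (nu @` (iota @^-1` O)) `&` V !=set0.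
    apply: pc; last by apply: open_nbhs_nbhs.
    by exists O => // y /= Oy; exists y.
  exists O => // x' Ox'; have [h [hF hx]] := hO x x' Ox Ox'.
  apply: W0W; rewrite /= -hx heqnu; apply: hfin => // y yF.
  by rewrite hF //; have [_] := hU y yF; rewrite he.
have [f hf] := choice conv.
have fi : forall x, f (iota x) = nu x.
  move=> x; have tp := trf_proper (iota x).
  exact: (@cvg_unique _ _ (nu @ trf (iota x)) _ _ _ (hf (iota x)) (convpt x)).
have fc : continuous f.
  move=> u W /= Wfu.
  have := @compact_regular K (f u) setT hH hK filterT W Wfu.
  move=> [C hC CW].
  have [O [oO Ou] OC] := hf u C hC.
  rewrite nbhsE; exists O => // v Ov; apply: CW => B hB.
  have [O' [oO' O'v] O'B] := hf v B hB.
  have [|w [[Ow O'w] [x _ xw]]] := hdense (O := O `&` O') _ (openI oO oO').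
    by exists v.
  by exists (nu x); split; [apply: OC | apply: O'B]; rewrite /= xw.
have actKc : forall g, continuous (actK g).
  move=> g k W /= Wg; move: Wg; rewrite nbhsE => -[W0 [oW0 W0k] W0W].
  have [F [U [V [hU oV Vk hfin]]]] := hjc g k W0 oW0 W0k.
  rewrite nbhsE; exists V => // k' Vk'; apply: W0W; apply: hfin => // y yF.
  by have [] := hU y yF.
exists f; split => // g z.
suff E : (fun z => f (actL g z)) = (fun z => actK g (f z)).
  exact: (congr1 (fun phi => phi z) E).
apply: dense_eq => //.
- by move=> w; apply: continuous_comp; [exact: hcont | exact: fc].
- by move=> w; apply: continuous_comp; [exact: fc | exact: actKc].
- by move=> x; rewrite -heq fi heqnu fi.
Qed.

End Gen.


Section Rays.
Context {d : Order.disp_t} {M : orderTopologicalType d}.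

Definition lowray (u : M) (lo : set M) :=
  lo = setT \/ exists2 a, a < u & lo = `]a, +oo[%classic.
Definition upray (u : M) (hi : set M) :=
  hi = setT \/ exists2 b, u < b & hi = `]-oo, b[%classic.

Lemma nbhs_rays (u : M) (W : set M) : nbhs u W ->
  exists lo hi, [/\ lowray u lo, upray u hi & lo `&` hi `<=` W].
Proof.
rewrite itv_nbhsE => -[[l r] [oi ui] iW].
have [lo [llo sub1]] : exists lo, lowray u lo /\ forall x, lo x -> (l <= BLeft x)%O.
  case: l oi ui {iW} => [[] a|[]] oi ui.
  - by move: (itv_open_ends_lside oi).
  - exists `]a, +oo[%classic; split.
      right; exists a => //; move: ui; rewrite in_itv /= => /andP[] //.
    by move=> x; rewrite /= in_itv /= andbT.
  - by exists setT; split; [left|].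
  - by move: (itv_open_ends_linfty oi).
have [hi [hhi sub2]] : exists hi, upray u hi /\ forall x, hi x -> (BRight x <= r)%O.
  case: r oi ui {iW sub1 llo} => [[] b|[]] oi ui.
  - exists `]-oo, b[%classic; split.
      right; exists b => //; move: ui; rewrite in_itv /= => /andP[] //.
    by move=> x; rewrite /= in_itv /=.
  - by move: (itv_open_ends_rside oi).
  - by move: (itv_open_ends_rinfty oi).
  - by exists setT; split; [left|].
exists lo, hi; split => // x [/sub1 h1 /sub2 h2]; apply: iW => /=.
by rewrite itv_boundlr h1 h2.
Qed.

End Rays.

Lemma ray_cvg {d : Order.disp_t} {T : orderTopologicalType d} (F : set_system T) (c : T) :
  Filter F ->
  (forall a, a < c -> F `]a, +oo[%classic) -> (forall b, c < b -> F `]-oo, b[%classic) -> F --> c.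
Proof.
move=> FF hl hu W /nbhs_rays [lo [hi [hlo hhi sub]]].
apply: (@filterS _ F FF (lo `&` hi) W sub); apply: filterI.
  by case: hlo => [->|[a ac ->]]; [exact: filterT | exact: hl].
by case: hhi => [->|[b cb ->]]; [exact: filterT | exact: hu].
Qed.

Section MC.
Context {d : Order.disp_t} (Y : orderType d).
Local Notation M := (mcomp Y).

Lemma lepp (x y : Y) : (MPt x <= MPt y :> M) = (x <= y).
Proof. by []. Qed.
Lemma lepg (x : Y) (B : gap Y) : (MPt x <= MGap B :> M) <-> sval B x.
Proof. by rewrite /Order.le /=; split => /asboolP. Qed.
Lemma legp (A : gap Y) (y : Y) : (MGap A <= MPt y :> M) <-> ~ sval A y.
Proof. by rewrite /Order.le /=; split => /asboolP. Qed.
Lemma legg (A B : gap Y) : (MGap A <= MGap B :> M) <-> sval A `<=` sval B.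
Proof. by rewrite /Order.le /=; split => /asboolP. Qed.
Lemma ltpp (x y : Y) : (MPt x < MPt y :> M) = (x < y).
Proof. by rewrite !ltNge lepp. Qed.
Lemma ltpg (x : Y) (B : gap Y) : (MPt x < MGap B :> M) <-> sval B x.
Proof. rewrite ltNge; split => [/negP h|h]; last by apply/negP => /legp.
by apply: contrapT => /legp. Qed.
Lemma ltgp (A : gap Y) (y : Y) : (MGap A < MPt y :> M) <-> ~ sval A y.
Proof. rewrite ltNge; split => [/negP h|h]; last by apply/negP => /lepg.
by move=> hy; apply: h; apply/lepg. Qed.
Lemma ltgg (A B : gap Y) : (MGap A < MGap B :> M) <-> exists2 y, sval B y & ~ sval A y.
Proof.
rewrite ltNge; split => [/negP h|[y By nAy]]; last by apply/negP => /legg /(_ y By).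
by apply: contrapT => /forall2NP hn; apply: h; apply/legg => y By; case: (hn y) => // /contrapT.
Qed.

Lemma gapL (A : gap Y) (a : M) : a < MGap A -> exists2 y, sval A y & a < MPt y.
Proof.
case: A => A [dA nmA nmC]; case: a => [w|C].
  move/ltpg => /= /nmA [y Ay wy]; by exists y => //; rewrite ltpp.
move/ltgg => /= [y Ay nCy]; exists y => //; exact/ltgp.
Qed.

Lemma gapR (A : gap Y) (b : M) : MGap A < b -> exists2 y, ~ sval A y & MPt y < b.
Proof.
case: A => A [dA nmA nmC]; case: b => [w|C].
  move/ltgp => /= /nmC [y Ay wy]; by exists y => //; rewrite ltpp.
move/ltgg => /= [y Cy nAy]; exists y => //; exact/ltpg.
Qed.

Lemma below (a v : M) : a < v -> exists p : Y, a <= MPt p /\ MPt p < v.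
Proof.
case: v => [x|B].
  case: a => [w|C] h; first by exists w.
  have [z nCz zx] := gapR h; exists z; split => //; exact/legp.
by move/gapL => [y By ay]; exists y; split; [exact: ltW | exact/ltpg].
Qed.

Lemma above (v b : M) : v < b -> exists p : Y, v < MPt p /\ MPt p <= b.
Proof.
case: v => [x|B].
  case: b => [w|C] h; first by exists w.
  have [y Cy ay] := gapL h; exists y; split => //; exact/ltW/ltpg.
case: b => [w|C] h; first by exists w.
have [y nBy yC] := gapR h; have [z Cz yz] := gapL yC.
exists z; split; last exact/ltW/ltpg.
apply/ltgp => Bz; apply: nBy; case: B {h yC} Bz => B [dB _ _] /= Bz.
by apply: dB Bz; rewrite -lepp; exact: ltW.
Qed.


Lemma mcomp_compact : compact [set: order_topology (mcomp Y)].
Proof.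
rewrite compact_ultra => F FU _.
pose D := [set y : Y | F [set v : order_topology M | MPt y <= v]].
suff [c [hl hu]] : exists c : order_topology M,
    (forall a, a < c -> F `]a, +oo[%classic) /\ (forall b, c < b -> F `]-oo, b[%classic).
  by exists c; split => //; apply: ray_cvg.
have upper : forall b : order_topology M, (exists2 p, ~ D p & MPt p <= b) -> F `]-oo, b[%classic.
  move=> b [p nDp pb].
  have [//|h] := in_ultra_setVsetC [set v : order_topology M | MPt p <= v] FU.
  apply: filterS h => v /= /negP; rewrite -ltNge => vp; rewrite in_itv /=.
  exact: lt_le_trans vp pb.
have lower : forall a : order_topology M, (exists2 y, D y & a < MPt y) -> F `]a, +oo[%classic.
  move=> a [y Dy ay]; apply: filterS Dy => v /= yv; rewrite in_itv /= andbT.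
  exact: lt_le_trans ay yv.
have dD : forall x y, y <= x -> D x -> D y.
  by move=> x y yx; apply: filterS => v /= xv; apply: le_trans xv; rewrite lepp.
case: (pselect (exists2 y0, D y0 & forall y, D y -> y <= y0)) => [[y0 Dy0 my0]|nmax].
  exists (MPt y0); split.
    by move=> a ay0; apply: lower; exists y0.
  move=> b y0b; apply: upper; have [p [y0p pb]] := above y0b.
  exists p => // Dp; have := my0 p Dp; rewrite ltpp in y0p.
  by rewrite leNgt y0p.
have nmax' : forall x, D x -> exists2 y, D y & x < y.
  move=> x Dx; apply: contrapT => hn; apply: nmax; exists x => // y Dy.
  by rewrite leNgt; apply/negP => xy; apply: hn; exists y.
case: (pselect (exists2 z0, ~ D z0 & forall z, ~ D z -> z0 <= z)) => [[z0 nDz0 mz0]|nmin].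
  exists (MPt z0); split; last first.
    by move=> b zb; apply: upper; exists z0 => //; exact: ltW.
  move=> a az0; have [p [ap pz0]] := below az0; rewrite ltpp in pz0.
  have Dp : D p by apply: contrapT => nDp; have := mz0 p nDp; rewrite leNgt pz0.
  have [y Dy py] := nmax' p Dp; apply: lower; exists y => //.
  by apply: le_lt_trans ap _; rewrite ltpp.
have nmin' : forall x, ~ D x -> exists2 y, ~ D y & y < x.
  move=> x nDx; apply: contrapT => hn; apply: nmin; exists x => // y nDy.
  by rewrite leNgt; apply/negP => xy; apply: hn; exists y.
have gD : is_gap D by split.
exists (MGap (exist _ D gD)); split.
  by move=> a /gapL [y Dy ay]; apply: lower; exists y.
by move=> b /gapR [y nDy yb]; apply: upper; exists y => //; exact: ltW.
Qed.

End MC.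


Section MM.
Context {d : Order.disp_t} (Y : orderType d).
Local Notation M := (mcomp Y).

Lemma aut_lt (f : Y -> Y) : is_aut f -> forall x y, (f x < f y) = (x < y).
Proof. by move=> [_ hm] x y; rewrite !ltNge (le_mono hm). Qed.
Lemma aut_le (f : Y -> Y) : is_aut f -> forall x y, (f x <= f y) = (x <= y).
Proof. by move=> [_ hm] x y; rewrite (le_mono hm). Qed.
Lemma aut_inj (f : Y -> Y) : is_aut f -> injective f.
Proof. by move=> [[g c1 _] _]; exact: can_inj c1. Qed.
Lemma aut_surj (f : Y -> Y) : is_aut f -> forall y, exists x, f x = y.
Proof. by move=> [[g _ c2] _] y; exists (g y). Qed.

Lemma img_gap (f : Y -> Y) (hf : is_aut f) (A : set Y) : is_gap A -> is_gap (f @` A).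
Proof.
move=> [dA nmA nmC]; split.
- move=> x y yx [a Aa fa]; subst x; have [z ez] := aut_surj hf y; subst y.
  by exists z => //; apply: dA Aa; rewrite -(aut_le hf).
- move=> _ [a Aa <-]; have [b Ab ab] := nmA a Aa.
  by exists (f b); [exists b | rewrite (aut_lt hf)].
- move=> y ny; have [z ez] := aut_surj hf y; subst y.
  have nAz : ~ A z by move=> Az; apply: ny; exists z.
  have [w nAw wz] := nmC z nAz; exists (f w); last by rewrite (aut_lt hf).
  by move=> [a Aa /(aut_inj hf) e]; apply: nAw; rewrite -e.
Qed.

Definition mmap (f : Y -> Y) (hf : is_aut f) (u : M) : M :=
  match u with
  | MPt y => MPt (f y)
  | MGap A => MGap (exist _ (f @` sval A) (img_gap hf (svalP A)))
  end.

Lemma gap_eq (A B : gap Y) : sval A = sval B -> MGap A = MGap B.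
Proof.
by move=> e; congr MGap; apply: eq_sig_hprop => // ? ? ?; exact: Prop_irrelevance.
Qed.

Lemma mmap_le f (hf : is_aut f) (u v : M) : u <= v -> mmap hf u <= mmap hf v.
Proof.
case: u => [x|A]; case: v => [y|B] /=.
- by rewrite !lepp (aut_le hf).
- by move/lepg => Bx; apply/lepg; exists x.
- move/legp => nAy; apply/legp => -[a Aa /(aut_inj hf) e]; apply: nAy.
  by rewrite -e.
- by move/legg => AB; apply/legg => _ [a Aa <-]; exists a => //; apply: AB.
Qed.

Lemma mmap_inj f (hf : is_aut f) : injective (mmap hf).
Proof.
case=> [x|A] [y|B] //= e.
- by case: e => /(aut_inj hf) ->.
- case: e => e; apply: gap_eq; apply/seteqP; split => z Az.
  + have : (f @` sval B) (f z) by rewrite -e; exists z.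
    by case=> b Bb /(aut_inj hf) <-.
  + have : (f @` sval A) (f z) by rewrite e; exists z.
    by case=> b Bb /(aut_inj hf) <-.
Qed.

Lemma mmap_lt f (hf : is_aut f) (u v : M) : (mmap hf u < mmap hf v) = (u < v).
Proof.
apply/idP/idP => h.
  rewrite ltNge; apply/negP => /(mmap_le hf); rewrite leNgt h //.
by rewrite lt_neqAle (inj_eq (@mmap_inj f hf)) (mmap_le hf (ltW h)) andbT (lt_eqF h).
Qed.

Lemma mmap_ext f g (hf : is_aut f) (hg : is_aut g) (u : M) :
  f =1 g -> mmap hf u = mmap hg u.
Proof.
move=> e; case: u => [x|A] /=; first by rewrite e.
by apply: gap_eq => /=; apply: eq_imagel => x _; exact: e.
Qed.

Lemma mmap_id f (hf : is_aut f) (u : M) : f =1 id -> mmap hf u = u.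
Proof.
move=> e; case: u => [x|[A hA]] /=; first by rewrite e.
apply: gap_eq => /=; rewrite (eq_imagel (f' := id)) ?image_id // => x _; exact: e.
Qed.

Lemma mmap_comp f g h (hf : is_aut f) (hg : is_aut g) (hh : is_aut h) (u : M) :
  f =1 g \o h -> mmap hf u = mmap hg (mmap hh u).
Proof.
move=> e; case: u => [x|[A hA]] /=; first by rewrite e.
apply: gap_eq => /=; rewrite (eq_imagel (f' := g \o h)) ?image_comp // => x _; exact: e.
Qed.

End MM.


Section XFacts.
Context {d : Order.disp_t} (X : orderType d).
Hypothesis hU : ultrahomogeneous X.
Hypothesis hxy : exists x y : X, x < y.

Lemma X_nomax (z : X) : exists w, z < w.
Proof.
have [x [y xy]] := hxy.
have [g /= [e]] := hU (s := [:: x]) (t := [:: z]) erefl erefl erefl.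
by exists (aut_fun g y); rewrite -e (aut_lt (proj2_sig g)).
Qed.

Lemma X_nomin (z : X) : exists w, w < z.
Proof.
have [x [y xy]] := hxy.
have [g /= [e]] := hU (s := [:: y]) (t := [:: z]) erefl erefl erefl.
by exists (aut_fun g x); rewrite -e (aut_lt (proj2_sig g)).
Qed.

Lemma X_dense (p q : X) : p < q -> exists2 r, p < r & r < q.
Proof.
move=> pq; have [x [y xy]] := hxy; have [w yw] := X_nomax y.
have s1 : sorted <%O [:: x; w] by rewrite /= andbT (lt_trans xy yw).
have s2 : sorted <%O [:: p; q] by rewrite /= andbT pq.
have [g /= [e1 e2]] := hU (s := [:: x; w]) (t := [:: p; q]) erefl s1 s2.
by exists (aut_fun g y); rewrite -?e1 -?e2 (aut_lt (proj2_sig g)).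
Qed.

Definition aut_idP : is_aut (@id X).
Proof. by split; [exists id | move=> x y]. Qed.
Definition aut_id : aut X := exist _ id aut_idP.

Lemma aut_move (F : seq X) (x x' : X) :
  (forall f, f \in F -> [/\ (f < x) = (f < x'), f != x & f != x']) ->
  exists h : aut X, (forall f, f \in F -> aut_fun h f = f) /\ aut_fun h x = x'.
Proof.
move=> hF.
pose sg z := if z == x then x' else z.
pose s := sort <=%O (undup (x :: F)).
have ss : sorted <%O s by rewrite sort_lt_sorted undup_uniq.
have ms : forall z, (z \in s) = (z \in x :: F) by move=> z; rewrite mem_sort mem_undup.
have st : sorted <%O (map sg s).
  apply: (@homo_sorted_in _ _ (mem (x :: F)) sg <%O <%O s); last exact: ss; last first.
    by apply/allP => z; rewrite ms.
  move=> a b; rewrite !inE /sg => /predU1P[->|aF] /predU1P[->|bF] ab.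
  - by rewrite ltxx in ab.
  - have [e bx bx'] := hF b bF; rewrite eqxx (negbTE bx).
    case/orP: (lt_total bx') => // bltx'; rewrite -e in bltx'.
    by have := lt_trans bltx' ab; rewrite ltxx.
  - have [_ ax ax'] := hF a aF; rewrite (negbTE ax) eqxx.
    by have [<- _ _] := hF a aF.
  - have [_ ax _] := hF a aF; have [_ bx _] := hF b bF.
    by rewrite (negbTE ax) (negbTE bx).
have [g eg] := hU (esym (size_map sg s)) ss st.
have {}eg := iffRL (eq_in_map _ _ _) eg.
exists g; split.
  move=> f fF; rewrite eg; last by rewrite ms inE fF orbT.
  by have [_ fx _] := hF f fF; rewrite /sg (negbTE fx).
by rewrite eg ?ms ?inE ?eqxx // /sg eqxx.
Qed.

End XFacts.


Section JC.
Context (TX : topologicalType) (G : Type) (ev : G -> TX -> TX)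
  (L : topologicalType) (act : G -> L -> L).

Definition jc (g : G) (k : L) (P : set L) :=
  exists (F : seq TX) (U : TX -> set TX) (V : set L),
      [/\ (forall x, x \in F -> open (U x) /\ U x (ev g x)),
          open V, V k &
          forall (h : G) (k' : L), (forall x, x \in F -> U x (ev h x)) ->
            V k' -> P (act h k')].

Lemma jcT g k : jc g k setT.
Proof. by exists [::], (fun _ => setT), setT; split => //; exact: openT. Qed.

Lemma jc_mono g k (P Q : set L) : P `<=` Q -> jc g k P -> jc g k Q.
Proof.
move=> PQ [F [U [V [h1 h2 h3 h4]]]]; exists F, U, V; split => // h k' hU Vk'.
by apply: PQ; apply: h4.
Qed.

Lemma jcI g k (P Q : set L) : jc g k P -> jc g k Q -> jc g k (P `&` Q).
Proof.
move=> [F1 [U1 [V1 [a1 b1 c1 d1]]]] [F2 [U2 [V2 [a2 b2 c2 d2]]]].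
exists (F1 ++ F2), (fun x => (if x \in F1 then U1 x else setT) `&`
                            (if x \in F2 then U2 x else setT)), (V1 `&` V2).
split.
- move=> x _; split.
    apply: openI.
      by case: ifP => [/a1 []//|_]; exact: openT.
    by case: ifP => [/a2 []//|_]; exact: openT.
  split.
    by case: ifP => [/a1 []//|_].
  by case: ifP => [/a2 []//|_].
- exact: openI.
- by split.
- move=> h k' hU [V1k V2k]; split.
    apply: d1 => // x xF1; have := hU x; rewrite mem_cat xF1 => /(_ isT) [] //.
  apply: d2 => // x xF2; have := hU x; rewrite mem_cat xF2 orbT => /(_ isT) [_] //.
Qed.

Lemma jcont_cont : pointwise_jcont ev act -> forall g, continuous (act g).
Proof.
move=> hjc g k W /= Wg; move: Wg; rewrite nbhsE => -[W0 [oW0 W0k] W0W].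
have [F [U [V [hU oV Vk hfin]]]] := hjc g k W0 oW0 W0k.
rewrite nbhsE; exists V => // k' Vk'; apply: W0W; apply: hfin => // y yF.
by have [] := hU y yF.
Qed.

End JC.

Lemma jc_rays (TX : topologicalType) (G : Type) (ev : G -> TX -> TX)
  {d} (L : orderTopologicalType d) (act : G -> L -> L) :
  (forall g k a, a < act g k -> jc ev act g k `]a, +oo[%classic) ->
  (forall g k b, act g k < b -> jc ev act g k `]-oo, b[%classic) ->
  pointwise_jcont ev act.
Proof.
move=> hl hu g k W oW Wg.
have /nbhs_rays [lo [hi [hlo hhi sub]]] : nbhs (act g k) W by exact: open_nbhs_nbhs.
apply: (jc_mono sub); apply: jcI.
  by case: hlo => [->|[a ac ->]]; [exact: jcT | exact: hl].
by case: hhi => [->|[b cb ->]]; [exact: jcT | exact: hu].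
Qed.

Lemma homo_lt_mono {d1 d2} (X : orderType d1) (Y : orderType d2) (j : X -> Y) :
  {homo j : x y / x < y} -> forall a b, (j a < j b) = (a < b).
Proof. by move=> hj a b; rewrite !ltNge (le_mono hj). Qed.

Section Sep.
Context {d1 d2 : Order.disp_t} (X : orderType d1) (Y : orderType d2).
Context (j : X -> Y) (hj : {homo j : x y / x < y}).
Local Notation M := (order_topology (mcomp Y)).

Lemma sep_open1 (u : M) (hu : forall x, MPt (j x) <> u) (F : seq X) :
  exists O : set M, [/\ open O, O u & forall x, O (MPt (j x)) ->
    forall f, f \in F -> (f < x) = (MPt (j f) < u) /\ f != x].
Proof.
elim: F => [|f F IH].
  by exists setT; split => //; exact: openT.
have [O [oO Ou hO]] := IH.
pose R : set M := if MPt (j f) < u then `]MPt (j f), +oo[%classic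
                  else `]-oo, MPt (j f)[%classic.
exists (R `&` O); split.
- apply: openI => //; rewrite /R; case: ifP => _; [exact: rray_open | exact: lray_open].
- split => //; rewrite /R; case: ifP => h; first by rewrite /= in_itv /= h.
  rewrite /= in_itv /= lt_neqAle; move: h; rewrite ltNge => /negbFE ->.
  by rewrite andbT; apply/eqP => e; apply: (hu f); rewrite e.
- move=> x [Rx Ox] g; rewrite inE => /predU1P[->|gF]; last exact: hO.
  move: Rx; rewrite /R; case: ifP => h; rewrite /= in_itv /= ?andbT => hx.
    by rewrite -(homo_lt_mono hj) -ltpp hx; split => //; rewrite (lt_eqF _) //;
      rewrite -(homo_lt_mono hj) -ltpp.
  rewrite ltpp (homo_lt_mono hj) in hx.
  by rewrite (lt_gtF hx); split => //; rewrite eq_sym (lt_eqF hx).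
Qed.

Lemma sep_open (u : M) (hu : forall x, MPt (j x) <> u) (F : seq X) :
  exists O : set M, [/\ open O, O u & forall x x', O (MPt (j x)) -> O (MPt (j x')) ->
    forall f, f \in F -> [/\ (f < x) = (f < x'), f != x & f != x']].
Proof.
have [O [oO Ou hO]] := sep_open1 hu F; exists O; split => // x x' Ox Ox' f fF.
have [e1 n1] := hO x Ox f fF; have [e2 n2] := hO x' Ox' f fF.
by split => //; rewrite e1 e2.
Qed.

Lemma pts_in_rays (y0 : Y) (u : M) lo hi : lowray u lo -> upray u hi ->
  exists y, lo (MPt y) /\ hi (MPt y).
Proof.
case: u => [x|A] hlo hhi.
  exists x; split; [case: hlo => [->|[a ? ->]] | case: hhi => [->|[b ? ->]]] => //=;
  by rewrite in_itv /= ?andbT.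
case: hlo => [->|[a au ->]].
  case: hhi => [->|[b ub ->]]; first by exists y0.
  have [y _ yb] := gapR ub; exists y; split => //=; by rewrite in_itv.
have [y Ay ay] := gapL au; exists y; split; first by rewrite /= in_itv /= ay.
have yu : MPt y < MGap A :> mcomp Y by apply/ltpg.
case: hhi => [->|[b ub ->]] //=; rewrite in_itv /=; exact: lt_trans yu ub.
Qed.

Lemma pts_dense (y0 : Y) : dense (range (@MPt _ Y : Y -> M)).
Proof.
move=> O [u Ou] oO.
have /nbhs_rays [lo [hi [hlo hhi sub]]] : nbhs u O by exact: open_nbhs_nbhs.
have [y [loy hiy]] := pts_in_rays y0 hlo hhi.
by exists (MPt y); split; [exact: sub | exists y].
Qed.

End Sep.

Section Emb.
Context {d : Order.disp_t} (Y : orderType d).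
Local Notation TY := (order_topology Y).
Local Notation L := (order_topology (mcomp Y)).

Lemma MPt_cont : continuous (@MPt _ Y : TY -> L).
Proof.
move=> x W /= /nbhs_rays [lo [hi [hlo hhi sub]]].
suff : nbhs (x : TY) (@MPt _ Y @^-1` W) by [].
apply: (@filterS _ _ _ (@MPt _ Y @^-1` (lo `&` hi))); first by move=> z /sub.
apply: filterI.
  case: hlo => [->|[a ax ->]]; first exact: filterT.
  have [p [ap px]] := below ax; rewrite ltpp in px.
  apply: (@filterS _ _ _ `]p, +oo[%classic); last first.
    by apply: open_nbhs_nbhs; split; [exact: rray_open | rewrite /= in_itv /= px].
  move=> z /=; rewrite !in_itv /= !andbT => pz.
  by apply: le_lt_trans ap _; rewrite ltpp.
case: hhi => [->|[b xb ->]]; first exact: filterT.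
have [p [xp pb]] := above xb; rewrite ltpp in xp.
apply: (@filterS _ _ _ `]-oo, p[%classic); last first.
  by apply: open_nbhs_nbhs; split; [exact: lray_open | rewrite /= in_itv /= xp].
move=> z /=; rewrite !in_itv /= => zp.
by apply: lt_le_trans _ pb; rewrite ltpp.
Qed.

Lemma MPt_emb : topological_embedding (@MPt _ Y : TY -> L).
Proof.
split; [by move=> x y [] | exact: MPt_cont | move=> U oU].
exists (\bigcup_(W in [set W : set L | open W /\ @MPt _ Y @^-1` W `<=` U]) W).
  by apply: bigcup_open => W [].
apply/seteqP; split => x; first by move=> [W [_ WU] Wx]; exact: WU.
move=> Ux; have /nbhs_rays [lo [hi [hlo hhi sub]]] : nbhs (x : TY) U.
  exact: open_nbhs_nbhs.
have [lo2 [olo2 lo2x lo2s]] : exists lo2 : set L,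
    [/\ open lo2, lo2 (@MPt _ Y x) & @MPt _ Y @^-1` lo2 `<=` lo].
  case: hlo => [->|[a ax ->]]; first by exists setT; split => //; exact: openT.
  exists (`]@MPt _ Y a, +oo[%classic : set L); split; first exact: rray_open.
    by rewrite /= in_itv /= andbT (@ltpp _ Y a x).
  by move=> z /=; rewrite !in_itv /= !andbT (@ltpp _ Y a z).
have [hi2 [ohi2 hi2x hi2s]] : exists hi2 : set L,
    [/\ open hi2, hi2 (@MPt _ Y x) & @MPt _ Y @^-1` hi2 `<=` hi].
  case: hhi => [->|[b xb ->]]; first by exists setT; split => //; exact: openT.
  exists (`]-oo, @MPt _ Y b[%classic : set L); split; first exact: lray_open.
    by rewrite /= in_itv /= (@ltpp _ Y x b).
  by move=> z /=; rewrite !in_itv /= (@ltpp _ Y z b).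
exists (lo2 `&` hi2) => //; split; first exact: openI.
by move=> z [/lo2s ? /hi2s ?]; apply: sub.
Qed.

End Emb.


Section Part1.
Context {d : Order.disp_t} (X : orderType d).
Hypothesis hU : ultrahomogeneous X.
Hypothesis hxy : exists x y : X, x < y.
Local Notation TX := (order_topology X).
Local Notation L := (order_topology (mcomp X)).

Definition act1 (g : aut X) : L -> L := mmap (proj2_sig g).

Lemma strict_between (a v : mcomp X) : a < v -> exists z, a < MPt z /\ MPt z < v.
Proof.
move=> h; have [p [ap pv]] := below h.
rewrite le_eqVlt in ap; case/orP: ap => [/eqP ea|ap]; last by exists p.
have [q [pq qv]] := above pv.
rewrite le_eqVlt in qv; case/orP: qv => [/eqP eq|qv]; last by exists q; rewrite ea.
subst v a; rewrite ltpp in pq; have [r pr rq] := X_dense hU hxy pq.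
by exists r; rewrite !ltpp.
Qed.

Lemma p1_lower g k a : a < act1 g k ->
  jc (@aut_fun _ X : aut X -> TX -> TX) act1 g k `]a, +oo[%classic.
Proof.
move=> /strict_between [z [az zk]].
have [y gy] := aut_surj (proj2_sig g) z.
have yk : MPt y < k by rewrite -(mmap_lt (proj2_sig g)) /= gy.
have [p [ap pz]] := below az; rewrite ltpp in pz.
exists [:: y], (fun _ => `]p, +oo[%classic), `]MPt y, +oo[%classic; split.
- move=> x; rewrite inE => /eqP ->; split; first exact: rray_open.
  by rewrite /= in_itv /= andbT /aut_fun gy.
- exact: rray_open.
- by rewrite /= in_itv /= andbT.
- move=> h k' hUh; rewrite /= !in_itv /= !andbT => yk'.
  have := hUh y (mem_head _ _); rewrite /= in_itv /= andbT => phy.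
  apply: le_lt_trans ap _; apply: (@lt_trans _ _ (act1 h (MPt y))).
    by rewrite /act1 /= ltpp.
  by rewrite /act1 mmap_lt.
Qed.

Lemma p1_upper g k b : act1 g k < b ->
  jc (@aut_fun _ X : aut X -> TX -> TX) act1 g k `]-oo, b[%classic.
Proof.
move=> /strict_between [z [kz zb]].
have [y gy] := aut_surj (proj2_sig g) z.
have yk : k < MPt y by rewrite -(mmap_lt (proj2_sig g)) /= gy.
have [p [zp pb]] := above zb; rewrite ltpp in zp.
exists [:: y], (fun _ => `]-oo, p[%classic), `]-oo, MPt y[%classic; split.
- move=> x; rewrite inE => /eqP ->; split; first exact: lray_open.
  by rewrite /= in_itv /= /aut_fun gy.
- exact: lray_open.
- by rewrite /= in_itv /=.
- move=> h k' hUh; rewrite /= !in_itv /= => yk'.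
  have := hUh y (mem_head _ _); rewrite /= in_itv /= => phy.
  apply: lt_le_trans pb; apply: (@lt_trans _ _ (act1 h (MPt y))).
    by rewrite /act1 mmap_lt.
  by rewrite /act1 /= ltpp.
Qed.

Lemma part1 : max_equiv_compactification
  (@aut_fun _ X : aut X -> order_topology X -> order_topology X)
  (@MPt _ X : order_topology X -> order_topology (mcomp X)).
Proof.
have [x0 _] := hxy.
have jcP : pointwise_jcont (@aut_fun _ X : aut X -> TX -> TX) act1.
  exact: jc_rays p1_lower p1_upper.
exists act1; split.
- split => //; split.
    move=> g eg z; apply: mmap_id => y.
    by have := congr1 (fun f => f y) eg.
  move=> f g h e z; apply: mmap_comp => y.
  by have := congr1 (fun f => f y) e.
- split; [exact: mcomp_compact | exact: order_hausdorff].
- split; [exact: MPt_emb | exact: pts_dense x0].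
- by [].
- move=> K actK nu hK hH hG hnu heq.
  apply: (@gen_universal TX (aut X) (@aut_fun _ X) L (@MPt _ X) (pts_dense x0)
    act1 (MPt_emb X) (jcont_cont jcP) (fun _ _ => erefl) (aut_id X) erefl) => //.
  move=> u nr F.
  have hu : forall x : X, MPt (id x) <> u by move=> x e; apply: nr; exists x.
  have hj : {homo (@id X) : x y / x < y} by [].
  have [O [oO Ou hO]] := sep_open hj hu F.
  exists O; split => // x x' Ox Ox'.
  have [h [h1 h2]] := aut_move hU (hO x x' Ox Ox'); exists h; split => // y yF; exact: h1.
Qed.

End Part1.


Section Part2.
Context {d : Order.disp_t} (X : orderType d).
Local Notation Y := (lex3 X).

Lemma lt_lex (a b : X) (i j : 'I_3) :
  ((a, i) < (b, j) :> Y) = (a < b) || ((a == b) && (i < j)).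
Proof.
rewrite ltEprodlexi /=; case: (ltgtP a b) => //= [ab|ab|->]; rewrite ?lexx //.
Qed.

Definition i0 : 'I_3 := Ordinal (isT : 0 < 3)%N.
Definition i1 : 'I_3 := Ordinal (isT : 1 < 3)%N.
Definition i2 : 'I_3 := Ordinal (isT : 2 < 3)%N.

Lemma I3_cases (i : 'I_3) : [\/ i = i0, i = i1 | i = i2].
Proof.
case: i => [[|[|[|n]]] h]; [constructor 1|constructor 2|constructor 3|by []];
  exact: val_inj.
Qed.

Definition lexmap (g : aut X) (p : Y) : Y := (aut_fun g p.1, p.2).

Lemma lexmap_aut (g : aut X) : is_aut (lexmap g).
Proof.
case: (proj2_sig g) => [[gi c1 c2] hm]; split.
  exists (fun p : Y => (gi p.1, p.2)) => -[a i]; rewrite /lexmap /=.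
    by rewrite /aut_fun c1.
  by rewrite /aut_fun c2.
move=> [a i] [b j]; rewrite /lexmap /= !lt_lex.
by rewrite (aut_lt (proj2_sig g)) (inj_eq (aut_inj (proj2_sig g))).
Qed.


Hypothesis hU : ultrahomogeneous X.
Hypothesis hxy : exists x y : X, x < y.
Local Notation TX := (discrete_topology X).
Local Notation L := (order_topology (mcomp Y)).

Local Notation pt x i := (@MPt _ Y (x, i) : L).

Definition act2 (g : aut X) : L -> L := mmap (lexmap_aut g).
Definition iota2 (x : TX) : L := MPt (lex3_mid x).

Lemma lt_i0 (j : 'I_3) : (j < i0) = false.
Proof. by case: j. Qed.
Lemma lt_i2 (j : 'I_3) : (i2 < j) = false.
Proof. by case: j => [[|[|[|n]]] h]. Qed.

Lemma lo_left (x : X) (lo : set L) : lowray (pt x i0) lo ->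
  exists2 r, r < x & lo ((pt r i1)).
Proof.
case=> [->|[a ax ->]]; first by have [r rx] := X_nomin hU hxy x; exists r.
have [[w j] [aq qx]] := below ax; rewrite ltpp lt_lex lt_i0 andbF orbF in qx.
have [r wr rx] := X_dense hU hxy qx; exists r => //=.
rewrite in_itv /= andbT; apply: le_lt_trans aq _; by rewrite ltpp lt_lex wr.
Qed.

Lemma hi_right (x : X) (hi : set L) : upray (pt x i2) hi ->
  exists2 r, x < r & hi ((pt r i1)).
Proof.
case=> [->|[b xb ->]]; first by have [r rx] := X_nomax hU hxy x; exists r.
have [[w j] [xq qb]] := above xb; rewrite ltpp lt_lex lt_i2 andbF orbF in xq.
have [r wr rx] := X_dense hU hxy xq; exists r => //=.
rewrite in_itv /=; apply: lt_le_trans qb; by rewrite ltpp lt_lex rx.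
Qed.

Lemma adjust (x : X) (i : 'I_3) (lo hi : set L) :
  lowray (pt x i) lo -> upray (pt x i) hi ->
  exists z, lo ((pt z i1)) /\ hi ((pt z i1)).
Proof.
case: (I3_cases i) => ->.
- move=> /lo_left [r rx lor] hhi; exists r; split => //.
  case: hhi => [->|[b xb ->]] //=; rewrite in_itv /=; apply: lt_trans xb.
  by rewrite ltpp lt_lex rx.
- move=> hlo hhi; exists x; split.
    by case: hlo => [->|[a ax ->]] //=; rewrite in_itv /= andbT.
  by case: hhi => [->|[b xb ->]] //=; rewrite in_itv /=.
- move=> hlo /hi_right [r xr hir]; exists r; split => //.
  case: hlo => [->|[a ax ->]] //=; rewrite in_itv /= andbT; apply: lt_trans ax _.
  by rewrite ltpp lt_lex xr.
Qed.

Lemma dense2 : dense (range iota2).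
Proof.
have [x0 _] := hxy.
move=> O [u Ou] oO.
have /nbhs_rays [lo [hi [hlo hhi sub]]] : nbhs u O by exact: open_nbhs_nbhs.
have [[x i] [loy hiy]] := pts_in_rays ((x0, i0) : Y) hlo hhi.
have hlo' : lowray (pt x i) lo.
  by case: hlo => [->|[a _ e]]; [left | right; exists a => //; move: loy; rewrite e /= in_itv /= andbT].
have hhi' : upray (pt x i) hi.
  by case: hhi => [->|[b _ e]]; [left | right; exists b => //; move: hiy; rewrite e /= in_itv /=].
have [z [loz hiz]] := adjust hlo' hhi'.
by exists ((pt z i1)); split; [exact: sub | exists z].
Qed.

Lemma emb2 : topological_embedding iota2.
Proof.
split.
- by move=> x y [].
- move=> x W /= Wn; suff : nbhs (x : TX) (iota2 @^-1` W) by [].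
  apply: (@filterS _ (nbhs (x : TX)) _ [set x]); last exact: discrete_set1.
  by move=> y ->; exact: nbhs_singleton Wn.
- move=> U _.
  exists (\bigcup_(x in U) (`](pt x i0), (pt x i2)[%classic : set L)).
    by apply: bigcup_open => x _; exact: itv_open.
  apply/seteqP; split => y.
    move=> [x Ux] /=; rewrite in_itv /= !ltpp !lt_lex /=.
    case/andP => /orP[xy|/andP[/eqP exy _]] /orP[yx|/andP[/eqP eyx _]];
      try by [rewrite -exy | rewrite eyx].
    by have := lt_trans xy yx; rewrite ltxx.
  move=> Uy; exists y => //=; rewrite in_itv /= !ltpp !lt_lex eqxx /=.
  by rewrite !orbT.
Qed.

Lemma p2_lower g k a : a < act2 g k ->
  jc (@aut_fun _ X : aut X -> TX -> TX) act2 g k `]a, +oo[%classic.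
Proof.
move=> /below [p [ap pk]].
have [q gq] := aut_surj (lexmap_aut g) p.
have qk : MPt q < k by rewrite -(mmap_lt (lexmap_aut g)) /= gq.
exists [:: q.1], (fun x => [set aut_fun g x]), `]MPt q, +oo[%classic; split.
- by move=> x _; split; [exact: discrete_open|].
- exact: rray_open.
- by rewrite /= in_itv /= andbT.
- move=> h k' hUh; rewrite /= !in_itv /= !andbT => qk'.
  have e : lexmap h q = p.
    by rewrite -gq /lexmap (hUh q.1 (mem_head _ _)).
  apply: le_lt_trans ap _; rewrite -e.
  by rewrite -[MPt (lexmap h q)]/(act2 h (MPt q)) /act2 mmap_lt.
Qed.

Lemma p2_upper g k b : act2 g k < b ->
  jc (@aut_fun _ X : aut X -> TX -> TX) act2 g k `]-oo, b[%classic.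
Proof.
move=> /above [p [kp pb]].
have [q gq] := aut_surj (lexmap_aut g) p.
have qk : k < MPt q by rewrite -(mmap_lt (lexmap_aut g)) /= gq.
exists [:: q.1], (fun x => [set aut_fun g x]), `]-oo, MPt q[%classic; split.
- by move=> x _; split; [exact: discrete_open|].
- exact: lray_open.
- by rewrite /= in_itv /=.
- move=> h k' hUh; rewrite /= !in_itv /= => qk'.
  have e : lexmap h q = p.
    by rewrite -gq /lexmap (hUh q.1 (mem_head _ _)).
  apply: lt_le_trans pb; rewrite -e.
  by rewrite -[MPt (lexmap h q)]/(act2 h (MPt q)) /act2 mmap_lt.
Qed.

Lemma part2 : max_equiv_compactification
  (@aut_fun _ X : aut X -> discrete_topology X -> discrete_topology X)
  ((fun x => MPt (lex3_mid x)) : discrete_topology X -> order_topology (mcomp (lex3 X))).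
Proof.
have jcP : pointwise_jcont (@aut_fun _ X : aut X -> TX -> TX) act2.
  exact: jc_rays p2_lower p2_upper.
exists act2; split.
- split => //; split.
    move=> g eg z; apply: mmap_id => -[y i] /=; rewrite /lexmap /=.
    by have := congr1 (fun f => f y) eg => /= ->.
  move=> f g h e z; apply: mmap_comp => -[y i]; rewrite /lexmap /=.
  by have := congr1 (fun f => f y) e => /= ->.
- split; [exact: mcomp_compact | exact: order_hausdorff].
- split; [exact: emb2 | exact: dense2].
- by [].
- move=> K actK nu hK hH hG hnu heq.
  apply: (@gen_universal TX (aut X) (@aut_fun _ X) L iota2 dense2
    act2 emb2 (jcont_cont jcP) (fun _ _ => erefl) (aut_id X) erefl) => //.
  move=> u nr F.
  have hu : forall x : X, MPt (lex3_mid x) <> u by move=> x e; apply: nr; exists x.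
  have hj : {homo (@lex3_mid _ X) : x y / x < y}.
    by move=> x y xy; rewrite /lex3_mid lt_lex xy.
  have [O [oO Ou hO]] := sep_open hj hu F.
  exists O; split => // x x' Ox Ox'.
  have [h [h1 h2]] := aut_move hU (hO x x' Ox Ox'); exists h; split => // y yF.
Qed.

End Part2.

End Lemma1p7Helpers.
Import Lemma1p7Helpers.
Unset Implicit Arguments.
Set Strict Implicit.
Set Printing Implicit Defensive.

Theorem lemma1p7 (d : Order.disp_t) (X : orderType d) :
  ultrahomogeneous X ->
  (exists x y : X, (x < y)%O) ->
  max_equiv_compactification (@aut_fun _ X : aut X -> order_topology X -> order_topology X)
    (@MPt _ X : order_topology X -> order_topology (mcomp X))
  /\
  max_equiv_compactification (@aut_fun _ X : aut X -> discrete_topology X -> discrete_topology X)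
    ((fun x => MPt (lex3_mid x)) : discrete_topology X -> order_topology (mcomp (lex3 X))).
Proof.
move=> hU hxy; split; [exact: part1 | exact: part2].
Qed.
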